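(* Let $G$ be a finite simple graph and suppose the automorphism group $\mathrm{Aut}(G)$ contains an element $\sigma$ of order $2$ such that, for every $v\in V(G)$, $\sigma(v)\neq v$ and $v\sigma(v)\notin E(G)$. Then $G$ is a $\mathcal{P}$ position for Grim.
   Context: Grim is a two-player game on a finite simple undirected graph. Any isolated vertices of the starting graph are deleted before play begins. Players alternate moves; a move consists of selecting a vertex of the current graph and deleting it together with all its incident edges, after which every vertex that has become isolated is also deleted. The player who makes the last legal move wins (a player facing the empty graph has no move and loses). A graph is an $\mathcal{N}$ position if the player about to move has a winning strategy, and a $\mathcal{P}$ position otherwise. An automorphism of $G$ is a permutation of $V(G)$ preserving adjacency. *)

(* Defs.v *)
From mathcomp Require Import all_boot all_fingroup.
Set Implicit Arguments. Unset Strict Implicit. Unset Printing Implicit Defensive.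

Definition simple_graph (T : finType) (e : rel T) : Prop :=
  symmetric e /\ irreflexive e.

(* Every Grim position reachable from G is the induced subgraph of G on a
   vertex set S; we represent positions by such sets S : {set T}. *)

Definition drop_isolated (T : finType) (e : rel T) (S : {set T}) : {set T} :=
  [set v in S | [exists u in S, e v u]].

Definition grim_start (T : finType) (e : rel T) : {set T} :=
  drop_isolated e [set: T].

Definition grim_move (T : finType) (e : rel T) (S : {set T}) (v : T) : {set T} :=
  drop_isolated e (S :\ v).

(* N-position test with fuel; the fuel #|S| suffices since every move
   strictly decreases the number of vertices. *)
Fixpoint grim_N_fuel (T : finType) (e : rel T) (n : nat) (S : {set T}) : bool :=
  match n with
  | 0 => false
  | n'.+1 => [exists v in S, ~~ grim_N_fuel e n' (grim_move e S v)]
  end.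

(* S is an N-position iff the player to move has a winning strategy
   (last player to move wins). *)
Definition grim_N (T : finType) (e : rel T) (S : {set T}) : bool :=
  grim_N_fuel e #|S| S.

Definition grim_P_graph (T : finType) (e : rel T) : Prop :=
  ~~ grim_N e (grim_start e).

Definition graph_aut (T : finType) (e : rel T) (sigma : {perm T}) : Prop :=
  forall x y, e (sigma x) (sigma y) = e x y.

(* Main.v *)
Require Import Defs.
From mathcomp Require Import all_boot all_fingroup.
From mathcomp Require Import zify.

Section S.
Variables (T : finType) (e : rel T).
Hypothesis esym : symmetric e.

Local Notation D := (drop_isolated e).

Lemma inD (A : {set T}) x : (x \in D A) = (x \in A) && [exists u in A, e x u].
Proof. by rewrite /drop_isolated inE. Qed.

Lemma Dsub (A : {set T}) : D A \subset A.
Proof. by apply/subsetP=> x; rewrite inD => /andP []. Qed.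

Lemma DD (A : {set T}) : D (D A) = D A.
Proof.
apply/setP=> x; rewrite !inD; apply/idP/idP.
  by case/andP.
move=> H; rewrite H /=; case/andP: H => xA /existsP [u /andP [uA xu]].
apply/existsP; exists u; rewrite xu inD uA andbT /=.
by apply/existsP; exists x; rewrite xA esym.
Qed.

Lemma Dmove (A : {set T}) w : D (D A :\ w) = D (A :\ w).
Proof.
apply/setP=> x; rewrite !inD !in_setD1 !inD; apply/idP/idP.
  case/andP=> /and3P [-> -> _] /existsP [u /andP [uA xu]].
  apply/existsP; exists u; rewrite xu andbT.
  by rewrite !in_setD1 inD in uA *; case/andP: uA => -> /andP [].
case/andP=> /andP [-> xA] /existsP [u /andP [uA xu]].
rewrite xA /=; rewrite in_setD1 in uA; case/andP: uA => uw uA.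
apply/andP; split.
  by apply/existsP; exists u; rewrite uA.
apply/existsP; exists u; rewrite xu andbT in_setD1 uw inD uA /=.
by apply/existsP; exists x; rewrite xA esym.
Qed.

Variable sigma : {perm T}.
Hypothesis aut : graph_aut e sigma.
Hypothesis invol : forall v, sigma (sigma v) = v.
Hypothesis noedge : forall v, sigma v != v /\ ~~ e v (sigma v).

Definition Pinv (S : {set T}) := forall x, x \in S -> sigma x \in S.

Lemma Dinv (A : {set T}) : Pinv A -> Pinv (D A).
Proof.
move=> PA x; rewrite !inD => /andP [xA /existsP [u /andP [uA xu]]].
rewrite PA //=; apply/existsP; exists (sigma u); rewrite PA //= aut //.
Qed.

Lemma rm2inv (S : {set T}) v : Pinv S -> Pinv (S :\ v :\ sigma v).
Proof.
move=> PS x; rewrite !in_setD1 => /and3P [x1 x2 xS].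
rewrite PS // andbT; apply/andP; split.
  by apply: contra x2 => /eqP H; rewrite (perm_inj H).
by apply: contra x1 => /eqP H; rewrite -H invol.
Qed.

Lemma key n : forall S : {set T}, #|S| <= n -> Pinv S -> D S = S -> grim_N_fuel e n S = false.
Proof.
elim/ltn_ind: n => [[|m]] IH S Hc PS DS //=.
apply/negbTE/existsP => -[v /andP [vS /negP]]; apply.
have [sv ev] := noedge v.
have svS : sigma v \in S by apply: PS.
have c2 : 2 <= #|S|.
  rewrite (cardsD1 v) vS (cardsD1 (sigma v)) in_setD1 sv svS /=; lia.
have svS' : sigma v \in grim_move e S v.
  rewrite /grim_move inD in_setD1 sv svS /=.
  move: svS; rewrite -{1}DS inD => /andP [_ /existsP [u /andP [uS su]]].
  apply/existsP; exists u; rewrite in_setD1 uS su andbT andbT.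
  by apply: contraNneq ev => uv; rewrite esym -[X in e _ X]uv.
case: m IH Hc => [|k] IH Hc; first lia.
rewrite /=; apply/existsP; exists (sigma v); rewrite svS' /=.
apply/negbT; rewrite /grim_move Dmove.
apply: (IH k) => //.
- apply: leq_trans (subset_leq_card (Dsub _)) _.
  have := cardsD1 v S; have := cardsD1 (sigma v) (S :\ v).
  rewrite vS in_setD1 sv svS /=; lia.
- by apply: Dinv; apply: rm2inv.
- by rewrite DD.
Qed.

End S.

Theorem theorem4p2 (T : finType) (e : rel T) (sigma : {perm T}) :
  simple_graph e ->
  graph_aut e sigma ->
  #[sigma]%g = 2 ->
  (forall v : T, sigma v != v /\ ~~ e v (sigma v)) ->
  grim_P_graph e.
Proof.
move=> [esym _] aut ord H.
have invol : forall v, sigma (sigma v) = v.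
  move=> v; have := expg_order sigma; rewrite ord => E.
  have E2 : (sigma * sigma = 1)%g by rewrite -E expgS expg1.
  by rewrite -permM E2 perm1.
rewrite /grim_P_graph /grim_N /grim_start.
rewrite (@key T e esym sigma aut invol H) //.
- by apply: Dinv => // x; rewrite inE.
- by rewrite DD.
Qed.
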